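(* Let $F : L_n \to \Delta K$ be a non-degenerate $2$-filtration, fix a dimension $q$, and fix grades $d,h\in L_n$ with $(1,1)\le d$ and $d\le h-(1,1)$. Set $a=d-(1,1)$ and $e=h-(1,1)$. If $adeh=0$, then $\mathsf{Dgm}_q F[d,h]=0$.
   Context: $K$ is a finite simplicial complex, coefficients in a field. $P_n=\{0<\dots<n\}$, $L_n=P_n\times P_n$ with product order, $\bot=(0,0)$, $\top=(n,n)$. $\mathsf{Int}\,L_n=\{[x,y]:x\le y\}$ with $[x,y]\le[z,w]$ iff $x\le z$, $y\le w$. A $2$-filtration is a monotone map $F$ from $L_n$ to subcomplexes of $K$ with $F(\bot)=\emptyset$, $F(\top)=K$. $ZB_qF[x,y]=\dim(Z_qF(x)\cap B_qF(y))$ for $y\ne\top$ and $\dim Z_qF(x)$ for $y=\top$ ($Z_q$, $B_q$ = $q$-cycles, $q$-boundaries). $\mathsf{Dgm}_qF$ is the unique function on $\mathsf{Int}\,L_n$ with $ZB_qF[z,w]=\sum_{[x,y]\le[z,w]}\mathsf{Dgm}_qF[x,y]$. Lower corners of a simplex $\sigma$ are the minimal elements of $\{x:\sigma\in F(x)\}$; $F$ is non-degenerate if any two distinct lower corners differ in both coordinates. Notation: $xy:=ZB_qF[x,y]$ for $x\le y$; $wxyz:=xz-xy-wz+wy$ for $w\le x\le y\le z$. *)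

(* Defs.v *)
From HB Require Import structures.
From mathcomp Require Import all_boot all_order all_algebra.
Set Implicit Arguments. Unset Strict Implicit. Unset Printing Implicit Defensive.
Import Order.TTheory GRing.Theory Num.Theory.
Local Open Scope ring_scope.

(* Vertices of K are 'I_N (ordered, which fixes simplex orientations);
   a simplex is a nonempty finite set of vertices. *)
Definition simplex (N : nat) := {set 'I_N}.

Definition is_complex (N : nat) (K : {set simplex N}) : bool :=
  [forall s in K, (s != set0) &&
     [forall t : simplex N, ((t != set0) && (t \subset s)) ==> (t \in K)]].

Definition chains (R : fieldType) (N : nat) := {ffun simplex N -> R^o}.

Definition chi (R : fieldType) (N : nat) (s : simplex N) : chains R N :=
  [ffun t => ((t == s)%:R : R)].

(* Incidence number [s : t] for t a codimension-1 face of s: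
   (-1)^i where i is the position (in s) of the removed vertex w. *)
Definition incid (R : fieldType) (N : nat) (t s : simplex N) : R :=
  if (t != set0) && (t \subset s) && (#|s| == #|t|.+1)%N then
    match [pick w in s :\: t] with
    | Some w => (-1) ^+ #|[set v in t | (v < w)%N]|
    | None => 0
    end
  else 0.

(* Simplicial boundary (on chains of positive dimension; the boundary of a
   vertex is 0, i.e. unreduced homology). *)
Definition bd_fun (R : fieldType) (N : nat) (c : chains R N) : chains R N :=
  [ffun t => \sum_(s : simplex N) c s * incid R t s].

Definition bd (R : fieldType) (N : nat) : 'End(chains R N) := linfun (@bd_fun R N).

Definition Cq (R : fieldType) (N q : nat) (L : {set simplex N}) : {vspace chains R N} :=
  <<[seq chi R s | s <- enum [set s in L | #|s| == q.+1]]>>%VS.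

Definition Zq (R : fieldType) (N q : nat) (L : {set simplex N}) : {vspace chains R N} :=
  (Cq R q L :&: lker (bd R N))%VS.

Definition Bq (R : fieldType) (N q : nat) (L : {set simplex N}) : {vspace chains R N} :=
  (bd R N @: Cq R q.+1 L)%VS.

(* Grades of L_n = P_n x P_n, encoded as pairs of nats in the box [0,n]^2. *)
Definition grade := (nat * nat)%type.
Definition inbox (n : nat) (x : grade) : bool := (x.1 <= n)%N && (x.2 <= n)%N.
Definition le2 (x y : grade) : bool := (x.1 <= y.1)%N && (x.2 <= y.2)%N.

Definition is_2filt (N n : nat) (K : {set simplex N}) (F : grade -> {set simplex N}) : Prop :=
  [/\ is_complex K,
      (forall x, inbox n x -> is_complex (F x) /\ F x \subset K),
      (forall x y, inbox n x -> inbox n y -> le2 x y -> F x \subset F y),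
      F (0%N, 0%N) = set0 &
      F (n, n) = K].

Definition lower_corner (N n : nat) (F : grade -> {set simplex N}) (s : simplex N) (x : grade) : Prop :=
  [/\ inbox n x, s \in F x &
      forall y, inbox n y -> le2 y x -> s \in F y -> y = x].

Definition nondegenerate2 (N n : nat) (F : grade -> {set simplex N}) : Prop :=
  forall (s : simplex N) x y, lower_corner n F s x -> lower_corner n F s y -> x <> y ->
    x.1 <> y.1 /\ x.2 <> y.2.

Definition ZB (R : fieldType) (N n q : nat) (F : grade -> {set simplex N}) (x y : grade) : int :=
  if y == (n, n) then (\dim (Zq R q (F x)))%:Z
  else (\dim (Zq R q (F x) :&: Bq R q (F y))%VS)%:Z.

(* D is the persistence diagram Dgm_q F: the function on Int L_n whose
   downward sums give ZB_q F (Moebius inversion; D is unique). *)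
Definition is_Dgm (R : fieldType) (N n q : nat) (F : grade -> {set simplex N})
  (D : grade -> grade -> int) : Prop :=
  forall z w, inbox n z -> inbox n w -> le2 z w ->
    ZB R n q F z w =
    \sum_(x1 < n.+1) \sum_(x2 < n.+1) \sum_(y1 < n.+1) \sum_(y2 < n.+1)
      (if [&& le2 (x1 : nat, x2 : nat) (y1 : nat, y2 : nat),
              le2 (x1 : nat, x2 : nat) z & le2 (y1 : nat, y2 : nat) w]
       then D (x1 : nat, x2 : nat) (y1 : nat, y2 : nat) else 0).

Definition wxyz (R : fieldType) (N n q : nat) (F : grade -> {set simplex N})
  (w x y z : grade) : int :=
  ZB R n q F x z - ZB R n q F x y - ZB R n q F w z + ZB R n q F w y.

(* Main.v *)
Require Import Defs.
From mathcomp Require Import all_boot all_order all_algebra.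
From mathcomp Require Import zify.
Set Implicit Arguments. Unset Strict Implicit. Unset Printing Implicit Defensive.
Import Order.TTheory GRing.Theory Num.Theory.
Local Open Scope ring_scope.

Definition ind (b : bool) : int := if b then 1 else 0.

Lemma L1 (n i : nat) (f : nat -> int) : (0 < i)%N -> (i <= n)%N ->
  \sum_(x < n.+1) ind (x <= i)%N * f x - \sum_(x < n.+1) ind (x <= i - 1)%N * f x = f i.
Proof.
move=> H0 Hn; have Hi : (i < n.+1)%N by lia.
rewrite -sumrB (bigD1 (Ordinal Hi)) //= big1.
  rewrite /ind leqnn (_ : (i <= i - 1)%N = false); last by lia.
  by rewrite mul1r mul0r subr0 addr0.
move=> x Hx; have Hx' : (x : nat) <> i.
  by move=> E; move/eqP: Hx; apply; apply: val_inj.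
rewrite /ind (_ : (x <= i)%N = (x <= i - 1)%N); last by lia.
by rewrite subrr.
Qed.

Definition vv (D : grade -> grade -> int) (x1 x2 y1 y2 : nat) : int :=
  if le2 (x1, x2) (y1, y2) then D (x1, x2) (y1, y2) else 0.
Definition V4 n D (x1 x2 y1 w2 : nat) := \sum_(y2 < n.+1) ind (y2 <= w2)%N * vv D x1 x2 y1 y2.
Definition V3 n D (x1 x2 w1 w2 : nat) := \sum_(y1 < n.+1) ind (y1 <= w1)%N * V4 n D x1 x2 y1 w2.
Definition V2 n D (x1 z2 w1 w2 : nat) := \sum_(x2 < n.+1) ind (x2 <= z2)%N * V3 n D x1 x2 w1 w2.
Definition MM n D (z1 z2 w1 w2 : nat) := \sum_(x1 < n.+1) ind (x1 <= z1)%N * V2 n D x1 z2 w1 w2.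

Lemma MM_eq n (D : grade -> grade -> int) z1 z2 w1 w2 :
  \sum_(x1 < n.+1) \sum_(x2 < n.+1) \sum_(y1 < n.+1) \sum_(y2 < n.+1)
      (if [&& le2 (x1 : nat, x2 : nat) (y1 : nat, y2 : nat),
              le2 (x1 : nat, x2 : nat) (z1, z2) & le2 (y1 : nat, y2 : nat) (w1, w2)]
       then D (x1 : nat, x2 : nat) (y1 : nat, y2 : nat) else 0)
  = MM n D z1 z2 w1 w2.
Proof.
rewrite /MM; apply eq_bigr; move=> x1 _; rewrite /V2 mulr_sumr.
apply eq_bigr; move=> x2 _; rewrite /V3 !mulr_sumr.
apply eq_bigr; move=> y1 _; rewrite /V4 !mulr_sumr.
apply eq_bigr; move=> y2 _; rewrite /vv /le2 /=.
case: (x1 <= y1)%N; case: (x2 <= y2)%N; case: (x1 <= z1)%N; case: (x2 <= z2)%N;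
  case: (y1 <= w1)%N; case: (y2 <= w2)%N; rewrite /ind /= ?mul1r ?mul0r ?mulr0 ?mulr1 //.
Qed.

Lemma CqS (R : fieldType) N q (L L' : {set simplex N}) :
  L \subset L' -> (Cq R q L <= Cq R q L')%VS.
Proof.
move=> sLL'; apply: sub_span => v /mapP [s]; rewrite mem_enum inE => /andP [sL sz] ->.
by apply: map_f; rewrite mem_enum inE sz (subsetP sLL').
Qed.

Lemma rect_dim (K : fieldType) (vT : vectType K) (Z1 Z2 B1 B2 : {vspace vT}) :
  (Z1 <= Z2)%VS -> (B1 <= B2)%VS ->
  (\dim (Z1 :&: B2) + \dim (Z2 :&: B1) <= \dim (Z2 :&: B2) + \dim (Z1 :&: B1))%N.
Proof.
move=> sZ sB; rewrite -dimv_sum_cap; apply: leq_add; apply: dimvS.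
  rewrite subv_add !subv_cap !capvSr !capvSl andbT /=.
  by rewrite (subv_trans (capvSl _ _) sZ) (subv_trans (capvSr _ _) sB).
by rewrite !subv_cap (subv_trans (capvSl _ _) (capvSl _ _))
  (subv_trans (capvSr _ _) (capvSr _ _)).
Qed.

Definition Bp (R : fieldType) N n q (F : grade -> {set simplex N}) (y : grade) :=
  if y == (n, n) then fullv else Bq R q (F y).

Lemma ZB_eq (R : fieldType) N n q (F : grade -> {set simplex N}) x y :
  ZB R n q F x y = (\dim (Zq R q (F x) :&: Bp R n q F y))%:Z.
Proof. by rewrite /ZB /Bp; case: ifP => _ //; rewrite capvf. Qed.

Lemma rect (R : fieldType) N n q (K : {set simplex N}) (F : grade -> {set simplex N})
  x1 x2 y1 y2 : is_2filt n K F -> inbox n x1 -> inbox n x2 -> inbox n y1 -> inbox n y2 ->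
  le2 x1 x2 -> le2 y1 y2 ->
  ZB R n q F x1 y2 + ZB R n q F x2 y1 <= ZB R n q F x2 y2 + ZB R n q F x1 y1.
Proof.
case=> _ _ mon _ _ i1 i2 j1 j2 l12 m12.
rewrite !ZB_eq -!PoszD lez_nat; apply: rect_dim.
  by rewrite /Zq; apply: capvS => //; apply: CqS; apply: mon.
rewrite /Bp; case E2: (y2 == (n, n)); first exact: subvf.
case E1: (y1 == (n, n)).
  move/eqP: E1 => E1; subst y1.
  move: E2 j2 m12; case: y2 => a b; rewrite /inbox /le2 /= => E2 /andP[? ?] /andP[? ?].
  have ea : a = n by lia.
  have eb : b = n by lia.
  by rewrite ea eb eqxx in E2.
by rewrite /Bq; apply: limgS; apply: CqS; apply: mon.
Qed.

Lemma grid (R : fieldType) N n q (K : {set simplex N}) (F : grade -> {set simplex N})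
  a x d e y h : is_2filt n K F -> inbox n a -> inbox n x -> inbox n d ->
  inbox n e -> inbox n y -> inbox n h ->
  le2 a x -> le2 x d -> le2 e y -> le2 y h ->
  ZB R n q F d h - ZB R n q F d e - ZB R n q F a h + ZB R n q F a e = 0 ->
  ZB R n q F x y = ZB R n q F a y + ZB R n q F x e - ZB R n q F a e.
Proof.
move=> HF ia ix id ie iy ih ax xd ey yh H.
have r1 := rect R q HF ia ix ie iy ax ey.
have r2 := rect R q HF ix id ie iy xd ey.
have r3 := rect R q HF ia ix iy ih ax yh.
have r4 := rect R q HF ix id iy ih xd yh.
lia.
Qed.

Theorem mainTheorem3 (R : fieldType) (N n q : nat) (K : {set simplex N})
  (F : grade -> {set simplex N}) (D : grade -> grade -> int) (d h : grade) :
  is_2filt n K F -> nondegenerate2 n F -> is_Dgm R n q F D ->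
  inbox n d -> inbox n h ->
  le2 (1%N, 1%N) d -> le2 d (h.1 - 1, h.2 - 1)%N ->
  wxyz R n q F (d.1 - 1, d.2 - 1)%N d (h.1 - 1, h.2 - 1)%N h = 0 ->
  D d h = 0.
Proof.
move=> HF _ HD; case: d => i j; case: h => k l.
rewrite /inbox /le2 /wxyz /= => /andP[Hi Hj] /andP[Hk Hl] /andP[H1i H1j] /andP[Hik Hjl] W.
have G := fun x1 x2 y1 y2 => @grid R N n q K F (i-1, j-1)%N (x1, x2) (i, j)
  (k-1, l-1)%N (y1, y2) (k, l) HF.
have Dm : forall z1 z2 w1 w2, (z1 <= n)%N -> (z2 <= n)%N -> (w1 <= n)%N -> (w2 <= n)%N ->
   (z1 <= w1)%N -> (z2 <= w2)%N -> ZB R n q F (z1, z2) (w1, w2) = MM n D z1 z2 w1 w2.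
  move=> z1 z2 w1 w2 ? ? ? ? ? ?; rewrite -MM_eq; apply: HD;
    by rewrite /inbox /le2 /=; apply/andP; split.
have E1 : forall z2 w1 w2, MM n D i z2 w1 w2 - MM n D (i - 1) z2 w1 w2 = V2 n D i z2 w1 w2.
  by move=> z2 w1 w2; rewrite /MM (L1 (fun x => V2 n D x z2 w1 w2)).
have E2 : forall w1 w2, V2 n D i j w1 w2 - V2 n D i (j - 1) w1 w2 = V3 n D i j w1 w2.
  by move=> w1 w2; rewrite /V2 (L1 (fun x => V3 n D i x w1 w2)); lia.
have E3 : forall w2, V3 n D i j k w2 - V3 n D i j (k - 1) w2 = V4 n D i j k w2.
  by move=> w2; rewrite /V3 (L1 (fun x => V4 n D i j x w2)); lia.
have E4 : V4 n D i j k l - V4 n D i j k (l - 1) = D (i, j) (k, l).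
  rewrite /V4 (L1 (fun x => vv D i j k x)); [| lia | lia].
  by rewrite /vv /le2 /= ifT //; apply/andP; split; lia.
have sc : forall a b, (a <= n)%N -> (b <= n)%N -> inbox n (a, b).
  by move=> a b ? ?; rewrite /inbox /= ; apply/andP; split.
have sl : forall a b c e, (a <= c)%N -> (b <= e)%N -> le2 (a, b) (c, e).
  by move=> a b c e ? ?; rewrite /le2 /= ; apply/andP; split.

have Gs : forall x1 x2 y1 y2, (i - 1 <= x1 <= i)%N -> (j - 1 <= x2 <= j)%N ->
   (k - 1 <= y1 <= k)%N -> (l - 1 <= y2 <= l)%N ->
   ZB R n q F (x1, x2) (y1, y2) = ZB R n q F (i - 1, j - 1)%N (y1, y2) +
    ZB R n q F (x1, x2) (k - 1, l - 1)%N - ZB R n q F (i - 1, j - 1)%N (k - 1, l - 1)%N.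
  move=> x1 x2 y1 y2 /andP[? ?] /andP[? ?] /andP[? ?] /andP[? ?].
  apply: G => //; (apply: sc || apply: sl); lia.
have g1 := Gs (i - 1)%N j (k - 1)%N l ltac:(apply/andP; split; lia) ltac:(apply/andP; split; lia) ltac:(apply/andP; split; lia) ltac:(apply/andP; split; lia).
have g2 := Gs (i - 1)%N j k (l - 1)%N ltac:(apply/andP; split; lia) ltac:(apply/andP; split; lia) ltac:(apply/andP; split; lia) ltac:(apply/andP; split; lia).
have g3 := Gs (i - 1)%N j k l ltac:(apply/andP; split; lia) ltac:(apply/andP; split; lia) ltac:(apply/andP; split; lia) ltac:(apply/andP; split; lia).
have g4 := Gs i (j - 1)%N (k - 1)%N l ltac:(apply/andP; split; lia) ltac:(apply/andP; split; lia) ltac:(apply/andP; split; lia) ltac:(apply/andP; split; lia).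
have g5 := Gs i (j - 1)%N k (l - 1)%N ltac:(apply/andP; split; lia) ltac:(apply/andP; split; lia) ltac:(apply/andP; split; lia) ltac:(apply/andP; split; lia).
have g6 := Gs i (j - 1)%N k l ltac:(apply/andP; split; lia) ltac:(apply/andP; split; lia) ltac:(apply/andP; split; lia) ltac:(apply/andP; split; lia).
have g7 := Gs i j (k - 1)%N l ltac:(apply/andP; split; lia) ltac:(apply/andP; split; lia) ltac:(apply/andP; split; lia) ltac:(apply/andP; split; lia).
have g8 := Gs i j k (l - 1)%N ltac:(apply/andP; split; lia) ltac:(apply/andP; split; lia) ltac:(apply/andP; split; lia) ltac:(apply/andP; split; lia).
have g9 := Gs i j k l ltac:(apply/andP; split; lia) ltac:(apply/andP; split; lia) ltac:(apply/andP; split; lia) ltac:(apply/andP; split; lia).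
have m1 := Dm (i - 1)%N j (k - 1)%N l ltac:(lia) ltac:(lia) ltac:(lia) ltac:(lia) ltac:(lia) ltac:(lia).
have m2 := Dm (i - 1)%N j k (l - 1)%N ltac:(lia) ltac:(lia) ltac:(lia) ltac:(lia) ltac:(lia) ltac:(lia).
have m3 := Dm (i - 1)%N j k l ltac:(lia) ltac:(lia) ltac:(lia) ltac:(lia) ltac:(lia) ltac:(lia).
have m4 := Dm (i - 1)%N j (k - 1)%N (l - 1)%N ltac:(lia) ltac:(lia) ltac:(lia) ltac:(lia) ltac:(lia) ltac:(lia).
have m5 := Dm i (j - 1)%N (k - 1)%N l ltac:(lia) ltac:(lia) ltac:(lia) ltac:(lia) ltac:(lia) ltac:(lia).
have m6 := Dm i (j - 1)%N k (l - 1)%N ltac:(lia) ltac:(lia) ltac:(lia) ltac:(lia) ltac:(lia) ltac:(lia).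
have m7 := Dm i (j - 1)%N k l ltac:(lia) ltac:(lia) ltac:(lia) ltac:(lia) ltac:(lia) ltac:(lia).
have m8 := Dm i (j - 1)%N (k - 1)%N (l - 1)%N ltac:(lia) ltac:(lia) ltac:(lia) ltac:(lia) ltac:(lia) ltac:(lia).
have m9 := Dm i j (k - 1)%N l ltac:(lia) ltac:(lia) ltac:(lia) ltac:(lia) ltac:(lia) ltac:(lia).
have m10 := Dm i j k (l - 1)%N ltac:(lia) ltac:(lia) ltac:(lia) ltac:(lia) ltac:(lia) ltac:(lia).
have m11 := Dm i j k l ltac:(lia) ltac:(lia) ltac:(lia) ltac:(lia) ltac:(lia) ltac:(lia).
have m12 := Dm i j (k - 1)%N (l - 1)%N ltac:(lia) ltac:(lia) ltac:(lia) ltac:(lia) ltac:(lia) ltac:(lia).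
have m13 := Dm (i - 1)%N (j - 1)%N (k - 1)%N l ltac:(lia) ltac:(lia) ltac:(lia) ltac:(lia) ltac:(lia) ltac:(lia).
have m14 := Dm (i - 1)%N (j - 1)%N k (l - 1)%N ltac:(lia) ltac:(lia) ltac:(lia) ltac:(lia) ltac:(lia) ltac:(lia).
have m15 := Dm (i - 1)%N (j - 1)%N k l ltac:(lia) ltac:(lia) ltac:(lia) ltac:(lia) ltac:(lia) ltac:(lia).
have m16 := Dm (i - 1)%N (j - 1)%N (k - 1)%N (l - 1)%N ltac:(lia) ltac:(lia) ltac:(lia) ltac:(lia) ltac:(lia) ltac:(lia).
have e11 := E1 j k l.
have e12 := E1 j k (l - 1)%N.
have e13 := E1 j (k - 1)%N l.
have e14 := E1 j (k - 1)%N (l - 1)%N.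
have e15 := E1 (j - 1)%N k l.
have e16 := E1 (j - 1)%N k (l - 1)%N.
have e17 := E1 (j - 1)%N (k - 1)%N l.
have e18 := E1 (j - 1)%N (k - 1)%N (l - 1)%N.
have e21 := E2 k l.
have e22 := E2 k (l - 1)%N.
have e23 := E2 (k - 1)%N l.
have e24 := E2 (k - 1)%N (l - 1)%N.
have e31 := E3 l. have e32 := E3 (l - 1)%N.
clear G Dm E1 E2 E3 sc sl HD HF.
lia.
Qed.
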